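(* Let $M=\{u=F(z_1,z_2,\bar z_1,\bar z_2)\}\subset\mathbb{C}^3$ be a rigid real-analytic hypersurface with $F_{z_1\bar z_1}$ nowhere zero, $F_{z_1\bar z_1}F_{z_2\bar z_2}-F_{z_2\bar z_1}F_{z_1\bar z_2}\equiv0$, and $\overline{\mathcal{L}}_1(k)$ nowhere zero, with the notation below. Define $$I_0:=-\frac13\frac{\mathcal{K}(\overline{\mathcal{L}}_1(\overline{\mathcal{L}}_1(k)))}{\overline{\mathcal{L}}_1(k)^2}+\frac13\frac{\mathcal{K}(\overline{\mathcal{L}}_1(k))\,\overline{\mathcal{L}}_1(\overline{\mathcal{L}}_1(k))}{\overline{\mathcal{L}}_1(k)^3}+\frac23\frac{\mathcal{L}_1(\mathcal{L}_1(\bar k))}{\mathcal{L}_1(\bar k)}+\frac23\frac{\mathcal{L}_1(\overline{\mathcal{L}}_1(k))}{\overline{\mathcal{L}}_1(k)},$$ $$V_0:=-\frac13\frac{\overline{\mathcal{L}}_1(\overline{\mathcal{L}}_1(\overline{\mathcal{L}}_1(k)))}{\overline{\mathcal{L}}_1(k)}+\frac59\Big(\frac{\overline{\mathcal{L}}_1(\overline{\mathcal{L}}_1(k))}{\overline{\mathcal{L}}_1(k)}\Big)^2-\frac19\frac{\overline{\mathcal{L}}_1(\overline{\mathcal{L}}_1(k))\,\bar P}{\overline{\mathcal{L}}_1(k)}+\frac13\overline{\mathcal{L}}_1(\bar P)-\frac19\bar P\bar P,$$ $$B:=\frac13\Big(\frac{\overline{\mathcal{L}}_1(\overline{\mathcal{L}}_1(k))}{\overline{\mathcal{L}}_1(k)}-\bar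 P\Big),\qquad \mathcal{Q}_0:=\frac12\overline{\mathcal{L}}_1(I_0)+\frac12 B\,I_0+\bar B\,\bar I_0-\frac12\frac{\mathcal{K}(V_0)}{\overline{\mathcal{L}}_1(k)} .$$ Then $$\mathcal{Q}_0=B\,I_0+\bar B\,\bar I_0-B\bar B+\frac23\operatorname{Re}\Big\{\mathcal{L}_1\Big[\frac{\overline{\mathcal{L}}_1(\overline{\mathcal{L}}_1(k))}{\overline{\mathcal{L}}_1(k)}\Big]\Big\}+\frac13\operatorname{Re}\big(\overline{\mathcal{L}}_1(P)\big).$$
   Context: Coordinates on $\mathbb{C}^3$ are $(z_1,z_2,w)$, $w=u+iv$; $M$ is parametrized by $(z_1,z_2,\bar z_1,\bar z_2,v)$. The vector fields are $\mathcal{L}_1:=\partial_{z_1}-iF_{z_1}\partial_v$, $\mathcal{L}_2:=\partial_{z_2}-iF_{z_2}\partial_v$, and $\overline{\mathcal{L}}_1:=\partial_{\bar z_1}+iF_{\bar z_1}\partial_v$ (complex conjugate); on functions independent of $v$ (as all functions below are) they act as $\partial_{z_1},\partial_{z_2},\partial_{\bar z_1}$ respectively. The slant function is $k:=-F_{z_2\bar z_1}/F_{z_1\bar z_1}$, $\mathcal{K}:=k\,\mathcal{L}_1+\mathcal{L}_2$, and $P:=F_{z_1z_1\bar z_1}/F_{z_1\bar z_1}$. A bar over a function denotes complex conjugation (so $\bar k,\bar P,\bar I_0,\bar B$ are the conjugates of $k,P,I_0,B$). *)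

(* Defs.v *)
From Stdlib Require Import Reals List.
From Coquelicot Require Import Coquelicot.
Open Scope R_scope.

Definition pt := (C * C)%type.

(* Real-direction shift: direction 0 = x1, 1 = y1, 2 = x2, 3 = y2. *)
Definition shift (j : nat) (p : pt) (t : R) : pt :=
  match j with
  | 0%nat => ((fst p + RtoC t)%C, snd p)
  | 1%nat => ((fst p + RtoC t * Ci)%C, snd p)
  | 2%nat => (fst p, (snd p + RtoC t)%C)
  | _ => (fst p, (snd p + RtoC t * Ci)%C)
  end.

Definition pd (j : nat) (g : pt -> C) (p : pt) : C :=
  (RtoC (Derive (fun t => Re (g (shift j p t))) 0)
   + Ci * RtoC (Derive (fun t => Im (g (shift j p t))) 0))%C.

Fixpoint iter_pd (ds : list nat) (g : pt -> C) : pt -> C :=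
  match ds with
  | nil => g
  | j :: ds' => pd j (iter_pd ds' g)
  end.

Definition smooth_on (U : pt -> Prop) (g : pt -> C) : Prop :=
  forall (ds : list nat) (p : pt), U p ->
    continuous (iter_pd ds g) p /\
    forall j : nat,
      ex_derive (fun t => Re (iter_pd ds g (shift j p t))) 0 /\
      ex_derive (fun t => Im (iter_pd ds g (shift j p t))) 0.

Definition Dz1 (g : pt -> C) (p : pt) : C := (/ 2 * (pd 0 g p - Ci * pd 1 g p))%C.
Definition Dzb1 (g : pt -> C) (p : pt) : C := (/ 2 * (pd 0 g p + Ci * pd 1 g p))%C.
Definition Dz2 (g : pt -> C) (p : pt) : C := (/ 2 * (pd 2 g p - Ci * pd 3 g p))%C.
Definition Dzb2 (g : pt -> C) (p : pt) : C := (/ 2 * (pd 2 g p + Ci * pd 3 g p))%C.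

Section Rigid.
Variable F : pt -> R.

Definition Fc (p : pt) : C := RtoC (F p).

(* On functions independent of v, L1, L2, Lbar1 act as d/dz1, d/dz2, d/dzbar1. *)
Definition L1 := Dz1.
Definition L2 := Dz2.
Definition Lb1 := Dzb1.

Definition F_z1zb1 := Dz1 (Dzb1 Fc).
Definition F_z2zb2 := Dz2 (Dzb2 Fc).
Definition F_z2zb1 := Dz2 (Dzb1 Fc).
Definition F_z1zb2 := Dz1 (Dzb2 Fc).
Definition F_z1z1zb1 := Dz1 (Dz1 (Dzb1 Fc)).

Definition kk (p : pt) : C := (- F_z2zb1 p / F_z1zb1 p)%C.
Definition kb (p : pt) : C := Cconj (kk p).
Definition KK (g : pt -> C) (p : pt) : C := (kk p * L1 g p + L2 g p)%C.

Definition PP (p : pt) : C := (F_z1z1zb1 p / F_z1zb1 p)%C.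
Definition Pb (p : pt) : C := Cconj (PP p).

Definition I0 (p : pt) : C :=
  (- / 3 * KK (Lb1 (Lb1 kk)) p / (Lb1 kk p * Lb1 kk p)
   + / 3 * KK (Lb1 kk) p * Lb1 (Lb1 kk) p / (Lb1 kk p * Lb1 kk p * Lb1 kk p)
   + 2 / 3 * L1 (L1 kb) p / L1 kb p
   + 2 / 3 * L1 (Lb1 kk) p / Lb1 kk p)%C.
Definition I0b (p : pt) : C := Cconj (I0 p).

Definition V0 (p : pt) : C :=
  (- / 3 * Lb1 (Lb1 (Lb1 kk)) p / Lb1 kk p
   + 5 / 9 * ((Lb1 (Lb1 kk) p / Lb1 kk p) * (Lb1 (Lb1 kk) p / Lb1 kk p))
   - / 9 * Lb1 (Lb1 kk) p * Pb p / Lb1 kk p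
   + / 3 * Lb1 Pb p
   - / 9 * Pb p * Pb p)%C.

Definition BB (p : pt) : C := (/ 3 * (Lb1 (Lb1 kk) p / Lb1 kk p - Pb p))%C.
Definition Bb (p : pt) : C := Cconj (BB p).

Definition Q0 (p : pt) : C :=
  (/ 2 * Lb1 I0 p + / 2 * BB p * I0 p + Bb p * I0b p
   - / 2 * KK V0 p / Lb1 kk p)%C.

Definition Q0_rhs (p : pt) : C :=
  (BB p * I0 p + Bb p * I0b p - BB p * Bb p
   + 2 / 3 * RtoC (Re (L1 (fun q => Lb1 (Lb1 kk) q / Lb1 kk q) p))
   + / 3 * RtoC (Re (Lb1 PP p)))%C.

End Rigid.

(* Main.v *)
Require Import Defs.
From Stdlib Require Import Reals List Lra FunctionalExtensionality.
From Coquelicot Require Import Coquelicot.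
Open Scope R_scope.


Definition DA (g : pt -> C) (q : pt) (j : nat) : Prop :=
  ex_derive (fun t => fst (g (shift j q t))) 0 /\ ex_derive (fun t => snd (g (shift j q t))) 0.

Lemma pd_eq g q j : pd j g q =
  (Derive (fun t => fst (g (shift j q t))) 0, Derive (fun t => snd (g (shift j q t))) 0).
Proof. unfold pd, Re, Im. apply injective_projections; simpl; ring. Qed.

Ltac ceq := apply injective_projections; simpl.

Lemma shift0 j q : shift j q 0 = q.
Proof.
  destruct q as [[a b] [c d]]; destruct j as [|[|[|]]]; unfold shift; simpl;
  f_equal; ceq; ring.
Qed.

Lemma R_plus (u v : R -> R) : ex_derive u 0 -> ex_derive v 0 ->
  ex_derive (fun t => u t + v t) 0 /\ Derive (fun t => u t + v t) 0 = Derive (fun t => u t) 0 + Derive (fun t => v t) 0.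
Proof. intros. split. auto_derive; repeat split; auto. apply is_derive_unique; auto_derive; [repeat split; auto | ring]. Qed.

Lemma R_opp (u : R -> R) : ex_derive u 0 ->
  ex_derive (fun t => - u t) 0 /\ Derive (fun t => - u t) 0 = - Derive (fun t => u t) 0.
Proof. intros. split. auto_derive; repeat split; auto. apply is_derive_unique; auto_derive; [repeat split; auto | ring]. Qed.

Lemma R_mult (u1 u2 v1 v2 : R -> R) : ex_derive u1 0 -> ex_derive u2 0 -> ex_derive v1 0 -> ex_derive v2 0 ->
  (ex_derive (fun t => u1 t * v1 t - u2 t * v2 t) 0 /\
   Derive (fun t => u1 t * v1 t - u2 t * v2 t) 0 =
     Derive (fun t => u1 t) 0 * v1 0 + u1 0 * Derive (fun t => v1 t) 0 - (Derive (fun t => u2 t) 0 * v2 0 + u2 0 * Derive (fun t => v2 t) 0)) /\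
  (ex_derive (fun t => u1 t * v2 t + u2 t * v1 t) 0 /\
   Derive (fun t => u1 t * v2 t + u2 t * v1 t) 0 =
     Derive (fun t => u1 t) 0 * v2 0 + u1 0 * Derive (fun t => v2 t) 0 + (Derive (fun t => u2 t) 0 * v1 0 + u2 0 * Derive (fun t => v1 t) 0)).
Proof. intros. split; split;
  (auto_derive; repeat split; auto; fail) ||
  (apply is_derive_unique; auto_derive; [repeat split; auto | ring]). Qed.

Lemma R_inv (u v : R -> R) : ex_derive u 0 -> ex_derive v 0 -> u 0 ^ 2 + v 0 ^ 2 <> 0 ->
  (ex_derive (fun t => u t / (u t ^ 2 + v t ^ 2)) 0 /\
   Derive (fun t => u t / (u t ^ 2 + v t ^ 2)) 0 =
     (Derive (fun t => u t) 0 * (v 0 ^ 2 - u 0 ^ 2) - 2 * u 0 * v 0 * Derive (fun t => v t) 0) / (u 0 ^ 2 + v 0 ^ 2) ^ 2) /\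
  (ex_derive (fun t => - v t / (u t ^ 2 + v t ^ 2)) 0 /\
   Derive (fun t => - v t / (u t ^ 2 + v t ^ 2)) 0 =
     (Derive (fun t => v t) 0 * (v 0 ^ 2 - u 0 ^ 2) + 2 * u 0 * v 0 * Derive (fun t => u t) 0) / (u 0 ^ 2 + v 0 ^ 2) ^ 2).
Proof.
  intros hu hv hn.
  assert (hn' : u 0 * (u 0 * 1) + v 0 * (v 0 * 1) <> 0) by (intro E; apply hn; transitivity (u 0 * (u 0 * 1) + v 0 * (v 0 * 1)); [ring | exact E]).
  split; split;
  (auto_derive; repeat split; auto; fail) ||
  (apply is_derive_unique; auto_derive; [repeat split; auto | field; auto]).
Qed.

Lemma C_neq0 (z : C) : z <> 0%C -> fst z ^ 2 + snd z ^ 2 <> 0.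
Proof.
  intros hz E. apply hz. destruct z as [x y]; simpl in *.
  assert (x = 0) by nra. assert (y = 0) by nra. subst. reflexivity.
Qed.

Lemma pd_plus f g q j : DA f q j -> DA g q j ->
  DA (fun x => f x + g x)%C q j /\ pd j (fun x => f x + g x)%C q = (pd j f q + pd j g q)%C.
Proof.
  intros [h1 h2] [h3 h4].
  destruct (R_plus _ _ h1 h3) as [e1 d1]. destruct (R_plus _ _ h2 h4) as [e2 d2].
  cbv beta in *. unfold DA; rewrite !pd_eq; unfold Cplus; simpl.
  split; [split; assumption|]. ceq; [rewrite d1|rewrite d2]; ring.
Qed.

Lemma pd_mult f g q j : DA f q j -> DA g q j ->
  DA (fun x => f x * g x)%C q j /\ pd j (fun x => f x * g x)%C q = (pd j f q * g q + f q * pd j g q)%C.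
Proof.
  intros [h1 h2] [h3 h4].
  destruct (R_mult _ _ _ _ h1 h2 h3 h4) as [[e1 d1] [e2 d2]].
  cbv beta in *. unfold DA; rewrite !pd_eq; unfold Cmult, Cplus; simpl.
  rewrite shift0 in d1, d2.
  split; [split; assumption|]. ceq; [rewrite d1|rewrite d2]; ring.
Qed.

Lemma pd_inv g q j : DA g q j -> g q <> 0%C ->
  DA (fun x => / g x)%C q j /\ pd j (fun x => / g x)%C q = (- pd j g q * / (g q * g q))%C.
Proof.
  intros [h1 h2] hz.
  assert (hn := C_neq0 _ hz).
  assert (hn' : fst (g (shift j q 0)) ^ 2 + snd (g (shift j q 0)) ^ 2 <> 0) by (rewrite shift0; auto).
  destruct (R_inv _ _ h1 h2 hn') as [[e1 d1] [e2 d2]].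
  cbv beta in *. unfold DA; rewrite !pd_eq; unfold Cinv, Cmult, Copp; simpl.
  rewrite shift0 in d1, d2.
  split; [split; assumption|].
  destruct (g q) as [x y]. simpl in *.
  ceq; [rewrite d1|rewrite d2]; field; split; auto; intro E; apply hn; nra.
Qed.

Lemma pd_opp f q j : pd j (fun x => - f x)%C q = (- pd j f q)%C.
Proof.
  rewrite !pd_eq; unfold Copp; simpl. ceq; apply Derive_opp.
Qed.

Lemma DA_opp f q j : DA f q j -> DA (fun x => - f x)%C q j.
Proof. intros [h1 h2]; unfold DA, Copp; simpl; split; [exact (proj1 (R_opp _ h1)) | exact (proj1 (R_opp _ h2))]. Qed.

Lemma pd_conj f q j : pd j (fun x => Cconj (f x)) q = Cconj (pd j f q).
Proof.
  rewrite !pd_eq; unfold Cconj; simpl. ceq; [reflexivity| apply Derive_opp].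
Qed.

Lemma DA_conj f q j : DA f q j -> DA (fun x => Cconj (f x)) q j.
Proof. intros [h1 h2]; unfold DA, Cconj; simpl; split; [exact h1 | exact (proj1 (R_opp _ h2))]. Qed.

Lemma pd_const (c : C) q j : pd j (fun _ => c) q = 0%C.
Proof. rewrite !pd_eq. ceq; apply Derive_const. Qed.

Lemma DA_const (c : C) q j : DA (fun _ => c) q j.
Proof. unfold DA; split; apply ex_derive_const. Qed.


Lemma absR (x y : R) : abs (minus x y) = Rabs (x - y).
Proof. reflexivity. Qed.

Definition cd (y : pt) (i : nat) : R :=
  match i with 0 => fst (fst y) | 1 => snd (fst y) | 2 => fst (snd y) | _ => snd (snd y) end.

Lemma open_box (U : pt -> Prop) q : open U -> U q ->
  exists eps : posreal, forall y : pt,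
    Rabs (cd y 0 - cd q 0) < eps -> Rabs (cd y 1 - cd q 1) < eps ->
    Rabs (cd y 2 - cd q 2) < eps -> Rabs (cd y 3 - cd q 3) < eps -> U y.
Proof.
  intros hU hq. destruct (hU q hq) as [eps H]. exists eps. intros y h0 h1 h2 h3.
  apply H. destruct q as [[a b][c d]], y as [[a' b'][c' d']]. simpl in *.
  unfold ball; simpl; unfold prod_ball; simpl; unfold ball; simpl; unfold prod_ball; simpl;
  unfold ball; simpl; unfold AbsRing_ball; rewrite !absR; tauto.
Qed.

Lemma cd_shift j q t i : cd (shift j q t) i =
  cd q i + (if Nat.eqb (Nat.min j 3) (Nat.min i 3) then t else 0).
Proof.
  destruct q as [[a b][c d]].
  destruct j as [|[|[|j]]]; destruct i as [|[|[|i]]]; simpl; unfold Cplus, Cmult; simpl; try ring;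
  destruct j; destruct i; simpl; ring.
Qed.

Lemma near_shift2 (U : pt -> Prop) q : open U -> U q ->
  exists eps : posreal, forall i j s t, Rabs s < eps -> Rabs t < eps ->
    U (shift i (shift j q s) t).
Proof.
  intros hU hq. destruct (open_box U q hU hq) as [eps H].
  assert (he : 0 < eps / 2) by (destruct eps; simpl; lra).
  exists (mkposreal _ he). simpl. intros i j s t hs ht.
  apply Rabs_def2 in hs. apply Rabs_def2 in ht.
  destruct eps as [e epos]; simpl in hs, ht.
  apply H; rewrite !cd_shift; cbn [pos];
  repeat match goal with |- context [if ?b then _ else _] => destruct b end;
  apply Rabs_def1; lra.
Qed.

Lemma loc_shift (U : pt -> Prop) q j : open U -> U q -> locally 0 (fun t => U (shift j q t)).
Proof.
  intros hU hq. destruct (near_shift2 U q hU hq) as [eps H].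
  exists eps. intros y hy. unfold ball in hy; simpl in hy; unfold AbsRing_ball in hy.
  rewrite absR in hy. change (Rabs (y - 0) < eps) in hy. rewrite Rminus_0_r in hy.
  rewrite <- (shift0 j q). apply H; auto. rewrite Rabs_R0. apply cond_pos.
Qed.

Lemma pd_ext (U : pt -> Prop) f g q j : open U -> U q -> (forall x, U x -> f x = g x) ->
  pd j f q = pd j g q.
Proof.
  intros hU hq hfg. rewrite !pd_eq. f_equal; apply Derive_ext_loc;
  apply (filter_imp (fun t => U (shift j q t))); try (intros t ht; rewrite hfg; auto; fail);
  apply loc_shift; auto.
Qed.

Lemma DA_ext (U : pt -> Prop) f g q j : open U -> U q -> (forall x, U x -> f x = g x) ->
  DA f q j -> DA g q j.
Proof.
  intros hU hq hfg [h1 h2]. split;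
  [apply (ex_derive_ext_loc (fun t => fst (f (shift j q t)))) |
   apply (ex_derive_ext_loc (fun t => snd (f (shift j q t))))]; auto;
  apply (filter_imp (fun t => U (shift j q t))); try (intros t ht; rewrite hfg; auto; fail);
  apply loc_shift; auto.
Qed.

Definition CT (g : pt -> C) (q : pt) : Prop :=
  continuous (fun x => fst (g x)) q /\ continuous (fun x => snd (g x)) q.

Lemma CT_ext (U : pt -> Prop) f g q : open U -> U q -> (forall x, U x -> f x = g x) ->
  CT f q -> CT g q.
Proof.
  intros hU hq hfg [h1 h2]. split;
  [apply (continuous_ext_loc (fun x => fst (g x)) (fun x => fst (f x))) |
   apply (continuous_ext_loc (fun x => snd (g x)) (fun x => snd (f x)))]; auto;
  apply (filter_imp U); try (intros t ht; rewrite hfg; auto; fail); apply hU; auto.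
Qed.

Lemma contR_plus (u v : pt -> R) q : continuous u q -> continuous v q ->
  continuous (fun x => u x + v x) q.
Proof. intros. apply (continuous_plus u v); auto. Qed.

Lemma contR_mult (u v : pt -> R) q : continuous u q -> continuous v q ->
  continuous (fun x => u x * v x) q.
Proof. intros. apply (continuous_mult u v); auto. Qed.

Lemma contR_opp (u : pt -> R) q : continuous u q -> continuous (fun x => - u x) q.
Proof. intros. apply (continuous_opp u); auto. Qed.

Lemma contR_inv (u : pt -> R) q : continuous u q -> u q <> 0 -> continuous (fun x => / u x) q.
Proof. intros. apply (continuous_comp u Rinv); auto. apply continuous_Rinv; auto. Qed.

Lemma contR_const (c : R) q : continuous (fun _ : pt => c) q.
Proof. apply continuous_const. Qed.

Lemma CT_plus f g q : CT f q -> CT g q -> CT (fun x => f x + g x)%C q.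
Proof. intros [h1 h2] [h3 h4]. split; simpl; apply contR_plus; auto. Qed.

Lemma CT_mult f g q : CT f q -> CT g q -> CT (fun x => f x * g x)%C q.
Proof.
  intros [h1 h2] [h3 h4]. split; simpl.
  - apply contR_plus; [apply contR_mult; auto| apply contR_opp, contR_mult; auto].
  - apply contR_plus; apply contR_mult; auto.
Qed.

Lemma CT_opp f q : CT f q -> CT (fun x => - f x)%C q.
Proof. intros [h1 h2]. split; simpl; apply contR_opp; auto. Qed.

Lemma CT_conj f q : CT f q -> CT (fun x => Cconj (f x)) q.
Proof. intros [h1 h2]. split; simpl; auto. apply contR_opp; auto. Qed.

Lemma CT_const (c : C) q : CT (fun _ => c) q.
Proof. split; apply contR_const. Qed.

Lemma CT_inv f q : CT f q -> f q <> 0%C -> CT (fun x => / f x)%C q.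
Proof.
  intros [h1 h2] hz. assert (hn := C_neq0 _ hz).
  assert (hc : continuous (fun x => / (fst (f x) ^ 2 + snd (f x) ^ 2)) q).
  { apply contR_inv; auto. apply contR_plus; simpl; apply contR_mult; auto;
    apply contR_mult; auto; apply contR_const. }
  split; simpl; unfold Rdiv; apply contR_mult; auto. apply contR_opp; auto.
Qed.


Definition DAll (g : pt -> C) (q : pt) : Prop := forall j, DA g q j.
Definition G0 (U : pt -> Prop) (g : pt -> C) : Prop := forall q, U q -> DAll g q /\ CT g q.
Fixpoint Gn (U : pt -> Prop) (n : nat) (g : pt -> C) : Prop :=
  match n with 0 => G0 U g | S n => G0 U g /\ forall j, Gn U n (pd j g) end.
Definition Good (U : pt -> Prop) (g : pt -> C) : Prop := forall n, Gn U n g.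

Lemma Gn_G0 U n g : Gn U n g -> G0 U g.
Proof. destruct n; simpl; tauto. Qed.

Lemma Gn_ext U n f g : open U -> (forall x, U x -> f x = g x) -> Gn U n f -> Gn U n g.
Proof.
  intros hU. revert f g. induction n as [|n IH]; intros f g hfg hf.
  - intros q hq. destruct (hf q hq) as [h1 h2]. split.
    + intro j. apply (DA_ext U f g); auto.
    + apply (CT_ext U f g); auto.
  - destruct hf as [h0 hj]. split.
    + intros q hq. destruct (h0 q hq) as [h1 h2]. split.
      * intro j. apply (DA_ext U f g); auto.
      * apply (CT_ext U f g); auto.
    + intro j. apply (IH (pd j f)); auto. intros x hx. apply (pd_ext U); auto.
Qed.

Lemma Gn_mono U n g : Gn U (S n) g -> Gn U n g.
Proof.
  revert g; induction n as [|n IH]; intros g h.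
  - exact (proj1 h).
  - destruct h as [h0 hj]. split; auto.
Qed.

Lemma Gn_plus U n f g : open U -> Gn U n f -> Gn U n g -> Gn U n (fun x => f x + g x)%C.
Proof.
  intros hU. revert f g. induction n as [|n IH]; intros f g hf hg.
  - intros q hq. destruct (hf q hq) as [h1 h2]. destruct (hg q hq) as [h3 h4].
    split; [intro j; apply pd_plus; auto | apply CT_plus; auto].
  - destruct hf as [hf0 hfj], hg as [hg0 hgj]. split.
    + intros q hq. destruct (hf0 q hq) as [h1 h2]. destruct (hg0 q hq) as [h3 h4].
      split; [intro j; apply pd_plus; auto | apply CT_plus; auto].
    + intro j. apply (Gn_ext U n (fun x => pd j f x + pd j g x)%C); auto.
      intros x hx. symmetry. apply pd_plus; [apply (hf0 x hx) | apply (hg0 x hx)].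
Qed.

Lemma Gn_opp U n f : open U -> Gn U n f -> Gn U n (fun x => - f x)%C.
Proof.
  intros hU. revert f. induction n as [|n IH]; intros f hf.
  - intros q hq. destruct (hf q hq) as [h1 h2].
    split; [intro j; apply DA_opp; auto | apply CT_opp; auto].
  - destruct hf as [hf0 hfj]. split.
    + intros q hq. destruct (hf0 q hq) as [h1 h2].
      split; [intro j; apply DA_opp; auto | apply CT_opp; auto].
    + intro j. apply (Gn_ext U n (fun x => - pd j f x)%C); auto.
      intros x hx. symmetry. apply pd_opp.
Qed.

Lemma Gn_conj U n f : open U -> Gn U n f -> Gn U n (fun x => Cconj (f x)).
Proof.
  intros hU. revert f. induction n as [|n IH]; intros f hf.
  - intros q hq. destruct (hf q hq) as [h1 h2].
    split; [intro j; apply DA_conj; auto | apply CT_conj; auto].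
  - destruct hf as [hf0 hfj]. split.
    + intros q hq. destruct (hf0 q hq) as [h1 h2].
      split; [intro j; apply DA_conj; auto | apply CT_conj; auto].
    + intro j. apply (Gn_ext U n (fun x => Cconj (pd j f x))); auto.
      intros x hx. symmetry. apply pd_conj.
Qed.

Lemma Gn_const U n (c : C) : open U -> Gn U n (fun _ => c).
Proof.
  intros hU. revert c. induction n as [|n IH]; intros c.
  - intros q hq. split; [intro j; apply DA_const | apply CT_const].
  - split.
    + intros q hq. split; [intro j; apply DA_const | apply CT_const].
    + intro j. apply (Gn_ext U n (fun _ => 0%C)); auto.
      intros x hx. symmetry. apply pd_const.
Qed.

Lemma Gn_mult U n f g : open U -> Gn U n f -> Gn U n g -> Gn U n (fun x => f x * g x)%C.
Proof.
  intros hU. revert f g. induction n as [|n IH]; intros f g hf hg.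
  - intros q hq. destruct (hf q hq) as [h1 h2]. destruct (hg q hq) as [h3 h4].
    split; [intro j; apply pd_mult; auto | apply CT_mult; auto].
  - assert (hfn := Gn_mono _ _ _ hf). assert (hgn := Gn_mono _ _ _ hg).
    destruct hf as [hf0 hfj], hg as [hg0 hgj]. split.
    + intros q hq. destruct (hf0 q hq) as [h1 h2]. destruct (hg0 q hq) as [h3 h4].
      split; [intro j; apply pd_mult; auto | apply CT_mult; auto].
    + intro j. apply (Gn_ext U n (fun x => pd j f x * g x + f x * pd j g x)%C); auto.
      * intros x hx. symmetry. apply pd_mult; [apply (hf0 x hx) | apply (hg0 x hx)].
      * apply Gn_plus; auto.
Qed.

Lemma Gn_inv U n (g : pt -> C) : open U -> (forall x, U x -> g x <> 0%C) -> Gn U n g -> Gn U n (fun x => / g x)%C.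
Proof.
  intros hU. revert g. induction n as [|n IH]; intros g hnz hg.
  - intros q hq. destruct (hg q hq) as [h1 h2].
    split; [intro j; apply pd_inv; auto | apply CT_inv; auto].
  - assert (hgn := Gn_mono _ _ _ hg).
    destruct hg as [hg0 hgj]. split.
    + intros q hq. destruct (hg0 q hq) as [h1 h2].
      split; [intro j; apply pd_inv; auto | apply CT_inv; auto].
    + intro j. apply (Gn_ext U n (fun x => - pd j g x * / (g x * g x))%C); auto.
      * intros x hx. symmetry. apply pd_inv; [apply (hg0 x hx) | auto].
      * apply Gn_mult; auto. apply Gn_opp; auto.
        apply (IH (fun x => g x * g x)%C); auto.
        -- intros x hx. apply Cmult_neq_0; auto.
        -- apply Gn_mult; auto.
Qed.


Lemma CT_of_cont (h : pt -> C) q : continuous h q -> CT h q.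
Proof.
intros H. split.
- apply (continuous_comp h fst); auto. destruct (h q) as [a b]. apply continuous_fst.
- apply (continuous_comp h snd); auto. destruct (h q) as [a b]. apply continuous_snd.
Qed.

Lemma Good_smooth U g : smooth_on U g -> Good U g.
Proof.
  intros hs n. change g with (iter_pd nil g). generalize (@nil nat) as ds.
  induction n as [|n IH]; intros ds.
  - intros q hq. destruct (hs ds q hq) as [hc hd]. split; [exact hd | apply CT_of_cont; auto].
  - split.
    + intros q hq. destruct (hs ds q hq) as [hc hd]. split; [exact hd | apply CT_of_cont; auto].
    + intro j. exact (IH (j :: ds)).
Qed.

Lemma Good_pd U g j : Good U g -> Good U (pd j g).
Proof. intros h n. exact (proj2 (h (S n)) j). Qed.
Lemma Good_DAll U g q : Good U g -> U q -> DAll g q.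
Proof. intros h hq. exact (proj1 (h 0%nat q hq)). Qed.
Lemma Good_ext U f g : open U -> (forall x, U x -> f x = g x) -> Good U f -> Good U g.
Proof. intros hU he h n. apply (Gn_ext U n f g); auto. Qed.
Lemma Good_plus U f g : open U -> Good U f -> Good U g -> Good U (fun x => f x + g x)%C.
Proof. intros hU h1 h2 n. apply Gn_plus; auto. Qed.
Lemma Good_mult U f g : open U -> Good U f -> Good U g -> Good U (fun x => f x * g x)%C.
Proof. intros hU h1 h2 n. apply Gn_mult; auto. Qed.
Lemma Good_opp U f : open U -> Good U f -> Good U (fun x => - f x)%C.
Proof. intros hU h1 n. apply Gn_opp; auto. Qed.
Lemma Good_conj U f : open U -> Good U f -> Good U (fun x => Cconj (f x)).
Proof. intros hU h1 n. apply Gn_conj; auto. Qed.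
Lemma Good_const U (c : C) : open U -> Good U (fun _ => c).
Proof. intros hU n. apply Gn_const; auto. Qed.
Lemma Good_inv U (g : pt -> C) : open U -> (forall x, U x -> g x <> 0%C) -> Good U g -> Good U (fun x => / g x)%C.
Proof. intros hU hz h1 n. apply Gn_inv; auto. Qed.

Definition Wop (w : nat) : (pt -> C) -> pt -> C :=
  match w with 0 => Dz1 | 1 => Dzb1 | 2 => Dz2 | _ => Dzb2 end.
Definition wbar (w : nat) : nat :=
  match w with 0 => 1 | 1 => 0 | 2 => 3 | _ => 2 end.
Definition dA (w : nat) : nat := match w with 0 | 1 => 0 | _ => 2 end.
Definition dB (w : nat) : nat := match w with 0 | 1 => 1 | _ => 3 end.
Definition cB (w : nat) : C := match w with 0 | 2 => (- (Ci / 2))%C | _ => (Ci / 2)%C end.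

Lemma Wop_eq w g q : Wop w g q = (/ 2 * pd (dA w) g q + cB w * pd (dB w) g q)%C.
Proof.
  destruct w as [|[|[|w]]]; unfold Wop, Dz1, Dzb1, Dz2, Dzb2, dA, dB, cB; simpl;
  field; (apply RtoC_neq; lra).
Qed.

Lemma W_plus f g q : DAll f q -> DAll g q ->
  DAll (fun x => f x + g x)%C q /\ forall w, Wop w (fun x => f x + g x)%C q = (Wop w f q + Wop w g q)%C.
Proof.
  intros hf hg. split. intro j; apply pd_plus; auto.
  intro w. rewrite !Wop_eq. rewrite (proj2 (pd_plus f g q _ (hf _) (hg _))).
  rewrite (proj2 (pd_plus f g q _ (hf _) (hg _))). ring.
Qed.

Lemma W_mult f g q : DAll f q -> DAll g q ->
  DAll (fun x => f x * g x)%C q /\ forall w, Wop w (fun x => f x * g x)%C q = (Wop w f q * g q + f q * Wop w g q)%C.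
Proof.
  intros hf hg. split. intro j; apply pd_mult; auto.
  intro w. rewrite !Wop_eq. rewrite (proj2 (pd_mult f g q _ (hf _) (hg _))).
  rewrite (proj2 (pd_mult f g q _ (hf _) (hg _))). ring.
Qed.

Lemma W_inv (g : pt -> C) q : DAll g q -> g q <> 0%C ->
  DAll (fun x => / g x)%C q /\ forall w, Wop w (fun x => / g x)%C q = (- (Wop w g q * / (g q * g q)))%C.
Proof.
  intros hg hz. split. intro j; apply pd_inv; auto.
  intro w. rewrite !Wop_eq. rewrite (proj2 (pd_inv g q _ (hg _) hz)).
  rewrite (proj2 (pd_inv g q _ (hg _) hz)). ring.
Qed.

Lemma W_opp f q : DAll f q ->
  DAll (fun x => - f x)%C q /\ forall w, Wop w (fun x => - f x)%C q = (- Wop w f q)%C.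
Proof.
  intros hf. split. intro j; apply DA_opp; auto.
  intro w. rewrite !Wop_eq. rewrite !pd_opp. ring.
Qed.

Lemma W_conj_gen f q w : Wop w (fun x => Cconj (f x)) q = Cconj (Wop (wbar w) f q).
Proof.
  rewrite !Wop_eq. rewrite !pd_conj.
  destruct w as [|[|[|w]]]; unfold wbar, dA, dB, cB; simpl;
  rewrite ?Cplus_conj, ?Cmult_conj; ceq; field.
Qed.

Lemma W_const (c : C) q w : Wop w (fun _ => c) q = 0%C.
Proof. rewrite Wop_eq, !pd_const. ring. Qed.

Inductive ex : Type :=
| Lf (f : pt -> C) | Cs (c : C) | Ad (a b : ex) | Mu (a b : ex) | Iv (a : ex) | Ng (a : ex) | Cj (a : ex).

Fixpoint ev (e : ex) : pt -> C :=
  match e with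
  | Lf f => f
  | Cs c => fun _ => c
  | Ad a b => fun x => (ev a x + ev b x)%C
  | Mu a b => fun x => (ev a x * ev b x)%C
  | Iv a => fun x => (/ ev a x)%C
  | Ng a => fun x => (- ev a x)%C
  | Cj a => fun x => Cconj (ev a x)
  end.

Fixpoint dW (e : ex) (w : nat) {struct e} : ex :=
  match e with
  | Lf f => Lf (Wop w f)
  | Cs _ => Cs 0%C
  | Ad a b => Ad (dW a w) (dW b w)
  | Mu a b => Ad (Mu (dW a w) b) (Mu a (dW b w))
  | Iv a => Ng (Mu (dW a w) (Iv (Mu a a)))
  | Ng a => Ng (dW a w)
  | Cj a => Cj (dW a (wbar w))
  end.

Fixpoint wf (e : ex) (q : pt) : Prop :=
  match e with
  | Lf f => DAll f q
  | Cs _ => True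
  | Ad a b | Mu a b => wf a q /\ wf b q
  | Iv a => wf a q /\ ev a q <> 0%C
  | Ng a | Cj a => wf a q
  end.

Lemma ev_sound e q : wf e q -> DAll (ev e) q /\ forall w, Wop w (ev e) q = ev (dW e w) q.
Proof.
  induction e as [f|c|a IHa b IHb|a IHa b IHb|a IHa|a IHa|a IHa]; simpl; intros hw.
  - split; auto.
  - split. intro j; apply DA_const. intro w. apply W_const.
  - destruct hw as [ha hb]. destruct (IHa ha) as [da wa]. destruct (IHb hb) as [db wb].
    destruct (W_plus _ _ q da db) as [d1 w1]. split; auto. intro w. rewrite w1, wa, wb. reflexivity.
  - destruct hw as [ha hb]. destruct (IHa ha) as [da wa]. destruct (IHb hb) as [db wb].
    destruct (W_mult _ _ q da db) as [d1 w1]. split; auto. intro w. rewrite w1, wa, wb. reflexivity.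
  - destruct hw as [ha hz]. destruct (IHa ha) as [da wa].
    destruct (W_inv _ q da hz) as [d1 w1]. split; auto. intro w. rewrite w1, wa. reflexivity.
  - destruct (IHa hw) as [da wa].
    destruct (W_opp _ q da) as [d1 w1]. split; auto. intro w. rewrite w1, wa. reflexivity.
  - destruct (IHa hw) as [da wa]. split.
    + intro j. apply DA_conj; auto.
    + intro w. rewrite W_conj_gen, wa. reflexivity.
Qed.

Fixpoint GoodE (U : pt -> Prop) (e : ex) : Prop :=
  match e with
  | Lf f => Good U f
  | Cs _ => True
  | Ad a b | Mu a b => GoodE U a /\ GoodE U b
  | Iv a => GoodE U a /\ forall x, U x -> ev a x <> 0%C
  | Ng a | Cj a => GoodE U a
  end.

Lemma GoodE_wf U e q : GoodE U e -> U q -> wf e q.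
Proof.
  induction e; simpl; intros h hq; try tauto.
  - apply (Good_DAll U); auto.
  - destruct h as [h1 h2]. split; auto.
Qed.

Lemma GoodE_Good U e : open U -> GoodE U e -> Good U (ev e).
Proof.
  intros hU. induction e; simpl; intros h.
  - auto.
  - apply Good_const; auto.
  - destruct h. apply Good_plus; auto.
  - destruct h. apply Good_mult; auto.
  - destruct h. apply Good_inv; auto.
  - apply Good_opp; auto.
  - apply Good_conj; auto.
Qed.

Lemma ev_W U e q w : GoodE U e -> U q -> Wop w (ev e) q = ev (dW e w) q.
Proof. intros h hq. apply (proj2 (ev_sound e q (GoodE_wf U e q h hq))). Qed.

Lemma W_ext U f g q w : open U -> U q -> (forall x, U x -> f x = g x) -> Wop w f q = Wop w g q.
Proof. intros hU hq he. rewrite !Wop_eq. rewrite (pd_ext U f g q (dA w)), (pd_ext U f g q (dB w)); auto. Qed.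

Lemma Good_W U g w : open U -> Good U g -> Good U (Wop w g).
Proof.
  intros hU hg. apply (Good_ext U (fun x => / 2 * pd (dA w) g x + cB w * pd (dB w) g x)%C); auto.
  - intros x hx. symmetry. apply Wop_eq.
  - apply Good_plus; auto; apply Good_mult; auto; try apply Good_const; auto; apply Good_pd; auto.
Qed.


Lemma shift_comm i j q s t : shift i (shift j q s) t = shift j (shift i q t) s.
Proof.
  destruct q as [[a b][c d]].
  destruct i as [|[|[|i]]]; destruct j as [|[|[|j]]]; unfold shift; simpl; unfold Cplus, Cmult; simpl;
  f_equal; f_equal; ring.
Qed.

Lemma shift_add i y u t : shift i (shift i y u) t = shift i y (u + t).
Proof.
  destruct y as [[a b][c d]].
  destruct i as [|[|[|i]]]; unfold shift; simpl; unfold Cplus, Cmult; simpl;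
  f_equal; f_equal; ring.
Qed.

Lemma Derive_trans (phi : R -> R) u : Derive phi u = Derive (fun t => phi (u + t)) 0.
Proof.
  unfold Derive. f_equal. apply Lim_ext. intro y. rewrite Rplus_0_l, Rplus_0_r. reflexivity.
Qed.

Lemma ex_derive_trans (phi : R -> R) u : ex_derive (fun t => phi (u + t)) 0 -> ex_derive phi u.
Proof.
  intros h.
  apply (ex_derive_ext (fun z => (fun t => phi (u + t)) (z - u))).
  { intro z. simpl. f_equal. ring. }
  apply (ex_derive_comp (fun t => phi (u + t)) (fun z => z - u)).
  - replace (u - u) with 0 by ring. exact h.
  - auto_derive; auto.
Qed.

Definition Dd (k : nat) (h : pt -> R) (y : pt) : R := Derive (fun t => h (shift k y t)) 0.

Lemma Dd_line k h y u : Derive (fun t => h (shift k y t)) u = Dd k h (shift k y u).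
Proof. rewrite Derive_trans. unfold Dd. apply Derive_ext. intro t. rewrite shift_add. reflexivity. Qed.

Lemma ex_line k (h : pt -> R) y u : ex_derive (fun t => h (shift k (shift k y u) t)) 0 ->
  ex_derive (fun t => h (shift k y t)) u.
Proof.
  intros H. apply ex_derive_trans. eapply ex_derive_ext; [|exact H].
  intro t. simpl. rewrite shift_add. reflexivity.
Qed.

Lemma box_ball (q y : pt) (e : posreal) :
  Rabs (cd y 0 - cd q 0) < e -> Rabs (cd y 1 - cd q 1) < e ->
  Rabs (cd y 2 - cd q 2) < e -> Rabs (cd y 3 - cd q 3) < e -> ball q e y.
Proof.
  intros h0 h1 h2 h3. destruct q as [[a b][c d]], y as [[a' b'][c' d']]. simpl in *.
  unfold ball; simpl; unfold prod_ball; simpl; unfold ball; simpl; unfold prod_ball; simpl;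
  unfold ball; simpl; unfold AbsRing_ball; rewrite !absR; tauto.
Qed.

Lemma schwarz_pt (U : pt -> Prop) (h : pt -> R) q i j : open U -> U q ->
  (forall y k, U y -> ex_derive (fun t => h (shift k y t)) 0) ->
  (forall y, U y -> ex_derive (fun t => Dd j h (shift i y t)) 0) ->
  (forall y, U y -> ex_derive (fun t => Dd i h (shift j y t)) 0) ->
  continuous (Dd i (Dd j h)) q -> continuous (Dd j (Dd i h)) q ->
  Dd i (Dd j h) q = Dd j (Dd i h) q.
Proof.
  intros hU hq H1 H2 H3 Hc Hc'.
  destruct (near_shift2 U q hU hq) as [eps Hn].
  pose (f := fun z t => h (shift j (shift i q z) t)).
  assert (E := Schwarz f 0 0).
  unfold f in E. unfold Dd. rewrite E; clear E.
  - apply Derive_ext. intro z. apply Derive_ext. intro t. rewrite shift_comm. reflexivity.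
  - exists eps. intros u v hu hv. rewrite Rminus_0_r in hu, hv. repeat split.
    + eapply ex_derive_ext. { intro z. rewrite shift_comm. reflexivity. }
      apply ex_line. apply H1. apply Hn; auto.
    + apply ex_line. apply H1. rewrite <- shift_comm. apply Hn; auto.
    + eapply ex_derive_ext. { intro z. rewrite (Dd_line j h (shift i q z) v), shift_comm. reflexivity. }
      apply (ex_line i (Dd j h)). apply H2. apply Hn; auto.
    + apply (ex_derive_ext (fun z => Dd i h (shift j (shift i q u) z))).
      { intro z. symmetry.
        rewrite (Derive_ext (fun t => h (shift j (shift i q t) z)) (fun t => h (shift i (shift j q z) t)))
          by (intro; rewrite shift_comm; reflexivity).
        rewrite (Dd_line i h (shift j q z) u), shift_comm. reflexivity. }
      apply (ex_line j (Dd i h)). apply H3. rewrite <- shift_comm. apply Hn; auto.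
  - intros e.
    apply filterlim_locally with (eps := e) in Hc.
    destruct Hc as [d Hd].
    assert (hd2 : 0 < Rmin eps d / 2).
    { apply Rmin_case; destruct eps, d; simpl; lra. }
    exists (mkposreal _ hd2). simpl. intros u v hu hv. rewrite Rminus_0_r in hu, hv.
    assert (A1 : Derive (fun z => Derive (fun t => h (shift j (shift i q z) t)) v) u = Dd i (Dd j h) (shift i (shift j q v) u)).
    { rewrite (Derive_ext _ (fun z => Dd j h (shift i (shift j q v) z))) by (intro z; rewrite (Dd_line j h (shift i q z) v), shift_comm; reflexivity).
      apply (Dd_line i (Dd j h) (shift j q v) u). }
    assert (A0 : Derive (fun z => Derive (fun t => h (shift j (shift i q z) t)) 0) 0 = Dd i (Dd j h) q) by reflexivity.
    rewrite A1, A0.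
    assert (Hb : ball q d (shift i (shift j q v) u)).
    { apply Rabs_def2 in hu. apply Rabs_def2 in hv.
      assert (Rmin eps d <= d) by apply Rmin_r.
      apply box_ball; rewrite !cd_shift;
      repeat match goal with |- context [if ?b then _ else _] => destruct b end;
      apply Rabs_def1; lra. }
    specialize (Hd _ Hb). unfold ball in Hd; simpl in Hd; unfold AbsRing_ball in Hd. rewrite absR in Hd. exact Hd.
  - intros e.
    apply filterlim_locally with (eps := e) in Hc'.
    destruct Hc' as [d Hd].
    assert (hd2 : 0 < Rmin eps d / 2).
    { apply Rmin_case; destruct eps, d; simpl; lra. }
    assert (A1 : forall u v, Derive (fun z => Derive (fun t => h (shift j (shift i q t) z)) u) v = Dd j (Dd i h) (shift j (shift i q u) v)).
    { intros u v. rewrite (Derive_ext _ (fun z => Dd i h (shift j (shift i q u) z))).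
      - apply (Dd_line j (Dd i h) (shift i q u) v).
      - intro z. rewrite (Derive_ext (fun t => h (shift j (shift i q t) z)) (fun t => h (shift i (shift j q z) t)))
          by (intro; rewrite shift_comm; reflexivity).
        rewrite (Dd_line i h (shift j q z) u), shift_comm. reflexivity. }
    exists (mkposreal _ hd2). simpl. intros u v hu hv. rewrite Rminus_0_r in hu, hv.
    rewrite !A1, !shift0.
    assert (Hb : ball q d (shift j (shift i q u) v)).
    { apply Rabs_def2 in hu. apply Rabs_def2 in hv.
      assert (Rmin eps d <= d) by apply Rmin_r.
      apply box_ball; rewrite !cd_shift;
      repeat match goal with |- context [if ?b then _ else _] => destruct b end;
      apply Rabs_def1; lra. }
    specialize (Hd _ Hb). unfold ball in Hd; simpl in Hd; unfold AbsRing_ball in Hd. rewrite absR in Hd. exact Hd.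
Qed.

Definition prj (b : bool) : C -> R := if b then fst else snd.

Lemma prj_pd b g j y : prj b (pd j g y) = Dd j (fun x => prj b (g x)) y.
Proof. destruct b; rewrite pd_eq; reflexivity. Qed.

Lemma prj_DA b g y k : DA g y k -> ex_derive (fun t => prj b (g (shift k y t))) 0.
Proof. destruct b; intros [h1 h2]; auto. Qed.

Lemma prj_CT b g y : CT g y -> continuous (fun x => prj b (g x)) y.
Proof. destruct b; intros [h1 h2]; auto. Qed.

Lemma Good_CT U g q : Good U g -> U q -> CT g q.
Proof. intros h hq. exact (proj2 (h 0%nat q hq)). Qed.

Lemma pd_comm U g q i j : open U -> Good U g -> U q -> pd i (pd j g) q = pd j (pd i g) q.
Proof.
  intros hU hg hq.
  assert (Hb : forall b, prj b (pd i (pd j g) q) = prj b (pd j (pd i g) q)).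
  { intro b. set (h := fun x => prj b (g x)).
    assert (K : forall k y, prj b (pd k g y) = Dd k h y) by (intros; apply prj_pd).
    assert (KK2 : forall k l y, prj b (pd k (pd l g) y) = Dd k (Dd l h) y).
    { intros k l y. rewrite prj_pd. unfold Dd at 1. apply Derive_ext. intro t. apply K. }
    rewrite !KK2. apply (schwarz_pt U h q i j hU hq).
    - intros y k hy. apply prj_DA. apply (Good_DAll U); auto.
    - intros y hy. eapply ex_derive_ext; [intro t; apply K|].
      apply prj_DA. apply (Good_DAll U (pd j g)); auto. apply Good_pd; auto.
    - intros y hy. eapply ex_derive_ext; [intro t; apply K|].
      apply prj_DA. apply (Good_DAll U (pd i g)); auto. apply Good_pd; auto.
    - eapply continuous_ext; [intro x; apply KK2|]. apply prj_CT.
      apply (Good_CT U); auto. apply Good_pd, Good_pd; auto.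
    - eapply continuous_ext; [intro x; apply KK2|]. apply prj_CT.
      apply (Good_CT U); auto. apply Good_pd, Good_pd; auto. }
  assert (H1 := Hb true). assert (H2 := Hb false). simpl in H1, H2.
  apply injective_projections; auto.
Qed.

Definition Wex (w : nat) (g : pt -> C) : ex :=
  Ad (Mu (Cs (/ 2)%C) (Lf (pd (dA w) g))) (Mu (Cs (cB w)) (Lf (pd (dB w) g))).

Lemma W_as_pd w g : Wop w g = ev (Wex w g).
Proof. apply functional_extensionality. intro x. apply Wop_eq. Qed.

Lemma W_comm U g q w1 w2 : open U -> Good U g -> U q ->
  Wop w1 (Wop w2 g) q = Wop w2 (Wop w1 g) q.
Proof.
  intros hU hg hq.
  assert (G : forall w, GoodE U (Wex w g)).
  { intro w. simpl. repeat split; apply Good_pd; auto. }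
  rewrite (W_as_pd w2 g), (W_as_pd w1 g).
  rewrite (ev_W U _ q w1 (G w2) hq), (ev_W U _ q w2 (G w1) hq).
  cbn [ev dW Wex]. rewrite !Wop_eq.
  rewrite (pd_comm U g q (dA w2) (dA w1)), (pd_comm U g q (dA w2) (dB w1)),
          (pd_comm U g q (dB w2) (dA w1)), (pd_comm U g q (dB w2) (dB w1)); auto.
  ring.
Qed.


Record Hyp (U : pt -> Prop) (F : pt -> R) : Prop := {
  hU : open U;
  gF : Good U (Fc F);
  hA : forall x, U x -> F_z1zb1 F x <> 0%C;
  ha : forall x, U x -> Dzb1 (kk F) x <> 0%C }.

Lemma gz1 U F g : Hyp U F -> Good U g -> Good U (Dz1 g).
Proof. intros H h. exact (Good_W U g 0 (hU _ _ H) h). Qed.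
Lemma gzb1 U F g : Hyp U F -> Good U g -> Good U (Dzb1 g).
Proof. intros H h. exact (Good_W U g 1 (hU _ _ H) h). Qed.
Lemma gz2 U F g : Hyp U F -> Good U g -> Good U (Dz2 g).
Proof. intros H h. exact (Good_W U g 2 (hU _ _ H) h). Qed.

Lemma gA U F : Hyp U F -> Good U (F_z1zb1 F).
Proof. intros H. unfold F_z1zb1. apply (gz1 U F); auto. apply (gzb1 U F); auto. apply (gF _ _ H). Qed.

Lemma gF21 U F : Hyp U F -> Good U (F_z2zb1 F).
Proof. intros H. unfold F_z2zb1. apply (gz2 U F); auto. apply (gzb1 U F); auto. apply (gF _ _ H). Qed.

Definition ek F := Mu (Ng (Lf (F_z2zb1 F))) (Iv (Lf (F_z1zb1 F))).
Lemma kk_ev F : kk F = ev (ek F).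
Proof. reflexivity. Qed.

Lemma gk U F : Hyp U F -> Good U (kk F).
Proof.
  intros H. rewrite kk_ev. apply GoodE_Good. apply (hU _ _ H).
  simpl. repeat split. apply (gF21 U F H). apply (gA U F H). apply (hA _ _ H).
Qed.

Definition eP F := Mu (Lf (Dz1 (F_z1zb1 F))) (Iv (Lf (F_z1zb1 F))).
Lemma PP_ev F : PP F = ev (eP F).
Proof. reflexivity. Qed.

Lemma gP U F : Hyp U F -> Good U (PP F).
Proof.
  intros H. rewrite PP_ev. apply GoodE_Good. apply (hU _ _ H).
  simpl. repeat split. apply (gz1 U F); auto; apply (gA U F H). apply (gA U F H). apply (hA _ _ H).
Qed.

Lemma gPb U F : Hyp U F -> Good U (Pb F).
Proof. intros H. unfold Pb. apply Good_conj. apply (hU _ _ H). apply (gP U F H). Qed.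

Lemma KK_comm U F g q : Hyp U F -> Good U g -> U q ->
  Dzb1 (KK F g) q = (Dzb1 (kk F) q * Dz1 g q + KK F (Dzb1 g) q)%C.
Proof.
  intros H hg hq.
  assert (E : KK F g = ev (Ad (Mu (Lf (kk F)) (Lf (Dz1 g))) (Lf (Dz2 g)))) by reflexivity.
  rewrite E. change (Dzb1 (ev (Ad (Mu (Lf (kk F)) (Lf (Dz1 g))) (Lf (Dz2 g)))) q) with
    (Wop 1 (ev (Ad (Mu (Lf (kk F)) (Lf (Dz1 g))) (Lf (Dz2 g)))) q).
  rewrite (ev_W U _ q 1). 2: { simpl. repeat split. apply (gk U F H). apply (gz1 U F g H hg). apply (gz2 U F g H hg). }
  2: auto.
  cbn [ev dW Wop].
  change (Dzb1 (Dz1 g) q) with (Wop 1 (Wop 0 g) q).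
  change (Dzb1 (Dz2 g) q) with (Wop 1 (Wop 2 g) q).
  rewrite (W_comm U g q 1 0), (W_comm U g q 1 2); auto; try apply (hU _ _ H).
  unfold KK, L1, L2. cbn [Wop]. ring.
Qed.

Lemma conj_Dz1 h x : Cconj (Dz1 h x) = Dzb1 (fun y => Cconj (h y)) x.
Proof. symmetry. exact (W_conj_gen h x 1). Qed.
Lemma conj_Dzb1 h x : Cconj (Dzb1 h x) = Dz1 (fun y => Cconj (h y)) x.
Proof. symmetry. exact (W_conj_gen h x 0). Qed.
Lemma conj_Dz2 h x : Cconj (Dz2 h x) = Dzb2 (fun y => Cconj (h y)) x.
Proof. symmetry. exact (W_conj_gen h x 3). Qed.
Lemma conj_Dzb2 h x : Cconj (Dzb2 h x) = Dz2 (fun y => Cconj (h y)) x.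
Proof. symmetry. exact (W_conj_gen h x 2). Qed.

Lemma Fc_conj F : (fun y => Cconj (Fc F y)) = Fc F.
Proof. apply functional_extensionality. intro y. unfold Fc, Cconj, RtoC. simpl. f_equal. ring. Qed.

Lemma conj_fun_Dzb1 h : (fun y => Cconj (Dzb1 h y)) = Dz1 (fun y => Cconj (h y)).
Proof. apply functional_extensionality. intro y. apply conj_Dzb1. Qed.
Lemma conj_fun_Dz1 h : (fun y => Cconj (Dz1 h y)) = Dzb1 (fun y => Cconj (h y)).
Proof. apply functional_extensionality. intro y. apply conj_Dz1. Qed.

Lemma A_real U F x : Hyp U F -> U x -> Cconj (F_z1zb1 F x) = F_z1zb1 F x.
Proof.
  intros H hx. unfold F_z1zb1. rewrite conj_Dz1, conj_fun_Dzb1, Fc_conj.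
  change (Wop 1 (Wop 0 (Fc F)) x = Wop 0 (Wop 1 (Fc F)) x).
  apply (W_comm U); auto. apply (hU _ _ H). apply (gF _ _ H).
Qed.

Lemma L1kb F : L1 (kb F) = fun x => Cconj (Dzb1 (kk F) x).
Proof. apply functional_extensionality. intro x. unfold L1, kb. rewrite conj_Dzb1. reflexivity. Qed.

Lemma L1L1kb F : L1 (L1 (kb F)) = fun x => Cconj (Dzb1 (Dzb1 (kk F)) x).
Proof. rewrite L1kb. apply functional_extensionality. intro x. unfold L1. rewrite conj_Dzb1. reflexivity. Qed.

Lemma Pb_U U F x : Hyp U F -> U x ->
  Pb F x = (Dzb1 (F_z1zb1 F) x / F_z1zb1 F x)%C.
Proof.
  intros H hx. unfold Pb, PP, F_z1z1zb1. rewrite Cdiv_conj by (apply (hA _ _ H); auto).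
  fold (F_z1zb1 F). rewrite (A_real U F x H hx), conj_Dz1. f_equal.
  change (Wop 1 (fun y => Cconj (F_z1zb1 F y)) x = Wop 1 (F_z1zb1 F) x).
  apply (W_ext U); auto. apply (hU _ _ H). intros y hy. apply (A_real U F y H hy).
Qed.

Lemma reify_helper (f : pt -> C) (e : ex) : (forall x, f x = ev e x) -> f = ev e.
Proof. intros h. apply functional_extensionality. exact h. Qed.

Ltac reif x t :=
  lazymatch t with
  | context [x] =>
    lazymatch t with
    | Cplus ?a ?b => let ea := reif x a in let eb := reif x b in constr:(Ad ea eb)
    | Cminus ?a ?b => let ea := reif x a in let eb := reif x b in constr:(Ad ea (Ng eb))
    | Cmult ?a ?b => let ea := reif x a in let eb := reif x b in constr:(Mu ea eb)
    | Cdiv ?a ?b => let ea := reif x a in let eb := reif x b in constr:(Mu ea (Iv eb))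
    | Copp ?a => let ea := reif x a in constr:(Ng ea)
    | Cinv ?a => let ea := reif x a in constr:(Iv ea)
    | Cconj ?a => let ea := reif x a in constr:(Cj ea)
    | ?f x => constr:(Lf f)
    end
  | _ => constr:(Cs t)
  end.

Ltac reify_eq :=
  apply reify_helper; let x := fresh "x" in intro x;
  lazymatch goal with |- ?l = ev ?E ?y => let r := reif y l in unify E r; reflexivity end.

Lemma GoodKK U F g : Hyp U F -> Good U g -> Good U (KK F g).
Proof.
  intros H hg. assert (E : KK F g = ev (Ad (Mu (Lf (kk F)) (Lf (Dz1 g))) (Lf (Dz2 g)))) by reflexivity.
  rewrite E. apply GoodE_Good. apply (hU _ _ H). simpl. repeat split.
  apply (gk U F H). apply (gz1 U F g H hg). apply (gz2 U F g H hg).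
Qed.

Lemma R1 U F x : Hyp U F -> U x ->
  (kk F x * Dz1 (F_z1zb1 F) x + Dz2 (F_z1zb1 F) x + F_z1zb1 F x * Dz1 (kk F) x = 0)%C.
Proof.
  intros H hx. set (A := F_z1zb1 F).
  assert (E1 : Dz1 (fun y => kk F y * A y)%C x = (Dz1 (kk F) x * A x + kk F x * Dz1 A x)%C).
  { change (Wop 0 (ev (Mu (Lf (kk F)) (Lf A))) x = (Dz1 (kk F) x * A x + kk F x * Dz1 A x)%C).
    rewrite (ev_W U _ x 0); auto. simpl. repeat split. apply (gk U F H). apply (gA U F H). }
  assert (E2 : Dz1 (fun y => kk F y * A y)%C x = Dz1 (fun y => - F_z2zb1 F y)%C x).
  { change (Wop 0 (fun y => kk F y * A y)%C x = Wop 0 (fun y => - F_z2zb1 F y)%C x).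
    apply (W_ext U); auto. apply (hU _ _ H). intros y hy. unfold kk. fold A. field. apply (hA _ _ H y hy). }
  assert (E3 : Dz1 (fun y => - F_z2zb1 F y)%C x = (- Dz1 (F_z2zb1 F) x)%C).
  { change (Wop 0 (ev (Ng (Lf (F_z2zb1 F)))) x = (- Dz1 (F_z2zb1 F) x)%C).
    rewrite (ev_W U _ x 0); auto. simpl. apply (gF21 U F H). }
  assert (E4 : Dz1 (F_z2zb1 F) x = Dz2 A x).
  { unfold A, F_z2zb1, F_z1zb1. change (Wop 0 (Wop 2 (Wop 1 (Fc F))) x = Wop 2 (Wop 0 (Wop 1 (Fc F))) x).
    apply (W_comm U); auto. apply (hU _ _ H). apply (gzb1 U F); auto. apply (gF _ _ H). }
  assert (S : (Dz1 (kk F) x * A x + kk F x * Dz1 A x)%C = (- Dz2 A x)%C)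
    by (rewrite <- E1, E2, E3, E4; reflexivity).
  transitivity ((Dz1 (kk F) x * A x + kk F x * Dz1 A x) + Dz2 A x)%C; [ring | rewrite S; ring].
Qed.

Definition eR1 F := Ad (Ad (Mu (Lf (kk F)) (Lf (Dz1 (F_z1zb1 F)))) (Lf (Dz2 (F_z1zb1 F))))
                       (Mu (Lf (F_z1zb1 F)) (Lf (Dz1 (kk F)))).

Lemma gR1 U F : Hyp U F -> GoodE U (eR1 F).
Proof.
  intros H. simpl. repeat split.
  apply (gk U F H). apply (gz1 U F _ H (gA U F H)). apply (gz2 U F _ H (gA U F H)).
  apply (gA U F H). apply (gz1 U F _ H (gk U F H)).
Qed.

Lemma R1b U F x : Hyp U F -> U x ->
  (Dzb1 (kk F) x * Dz1 (F_z1zb1 F) x + kk F x * Dzb1 (Dz1 (F_z1zb1 F)) x + Dzb1 (Dz2 (F_z1zb1 F)) x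
   + (Dzb1 (F_z1zb1 F) x * Dz1 (kk F) x + F_z1zb1 F x * Dz1 (Dzb1 (kk F)) x) = 0)%C.
Proof.
  intros H hx.
  assert (E0 : Wop 1 (ev (eR1 F)) x = Wop 1 (fun _ => 0%C) x).
  { apply (W_ext U); auto. apply (hU _ _ H). intros y hy. apply (R1 U F y H hy). }
  rewrite W_const in E0. rewrite (ev_W U _ x 1 (gR1 U F H) hx) in E0.
  cbn [ev dW eR1 Wop] in E0.
  change (Dzb1 (Dz1 (kk F)) x) with (Wop 1 (Wop 0 (kk F)) x) in E0.
  rewrite (W_comm U (kk F) x 1 0 (hU _ _ H) (gk U F H) hx) in E0.
  cbn [Wop] in E0. rewrite <- E0. ring.
Qed.

Lemma solve3 (u v w : C) : (u + v + w = 0)%C -> v = (-(u + w))%C.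
Proof. intros h. transitivity ((u + v + w) - (u + w))%C; [ring | rewrite h; ring]. Qed.
Lemma solve4 (u v y w : C) : (u + v + y + w = 0)%C -> y = (-(u + v + w))%C.
Proof. intros h. transitivity ((u + v + y + w) - (u + v + w))%C; [ring | rewrite h; ring]. Qed.

Definition ePb F := Mu (Lf (Dzb1 (F_z1zb1 F))) (Iv (Lf (F_z1zb1 F))).

Lemma gePb U F : Hyp U F -> GoodE U (ePb F).
Proof.
  intros H. simpl. repeat split. apply (gzb1 U F _ H (gA U F H)). apply (gA U F H). apply (hA _ _ H).
Qed.

Lemma Pb_ev U F w x : Hyp U F -> U x -> Wop w (Pb F) x = ev (dW (ePb F) w) x.
Proof.
  intros H hx. rewrite <- (ev_W U _ x w (gePb U F H) hx).
  apply (W_ext U); auto. apply (hU _ _ H). intros y hy. apply (Pb_U U F y H hy).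
Qed.

Lemma KPb U F x : Hyp U F -> U x ->
  KK F (Pb F) x = (- Dz1 (Dzb1 (kk F)) x - Dzb1 (kk F) x * PP F x)%C.
Proof.
  intros H hx. unfold KK, L1, L2.
  change (Dz1 (Pb F) x) with (Wop 0 (Pb F) x). change (Dz2 (Pb F) x) with (Wop 2 (Pb F) x).
  rewrite !(Pb_ev U F _ x H hx). cbn [ev dW ePb Wop].
  change (Dz1 (Dzb1 (F_z1zb1 F)) x) with (Wop 0 (Wop 1 (F_z1zb1 F)) x).
  change (Dz2 (Dzb1 (F_z1zb1 F)) x) with (Wop 2 (Wop 1 (F_z1zb1 F)) x).
  rewrite (W_comm U _ x 0 1 (hU _ _ H) (gA U F H) hx), (W_comm U _ x 2 1 (hU _ _ H) (gA U F H) hx).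
  cbn [Wop].
  rewrite (solve4 _ _ _ _ (R1b U F x H hx)).
  rewrite (solve3 _ _ _ (R1 U F x H hx)).
  unfold PP, F_z1z1zb1. fold (F_z1zb1 F).
  field. apply (hA _ _ H x hx).
Qed.

Lemma LPb U F q : Hyp U F -> U q -> Dz1 (Pb F) q = Dzb1 (PP F) q.
Proof.
  intros H hq. change (Wop 0 (Pb F) q = Wop 1 (PP F) q).
  rewrite (Pb_ev U F 0 q H hq), PP_ev.
  rewrite (ev_W U (eP F) q 1); auto.
  2: { simpl. repeat split. apply (gz1 U F _ H (gA U F H)). apply (gA U F H). apply (hA _ _ H). }
  cbn [ev dW ePb eP Wop].
  change (Dz1 (Dzb1 (F_z1zb1 F)) q) with (Wop 0 (Wop 1 (F_z1zb1 F)) q).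
  rewrite (W_comm U _ q 0 1 (hU _ _ H) (gA U F H) hq). cbn [Wop]. ring.
Qed.

Lemma DP_real U F q : Hyp U F -> U q -> Cconj (Dzb1 (PP F) q) = Dzb1 (PP F) q.
Proof.
  intros H hq. rewrite conj_Dzb1. change (Dz1 (Pb F) q = Dzb1 (PP F) q). apply (LPb U F q H hq).
Qed.

Lemma KDPb U F q : Hyp U F -> U q ->
  KK F (Dzb1 (Pb F)) q = (- Dz1 (Dzb1 (Dzb1 (kk F))) q - Dzb1 (Dzb1 (kk F)) q * PP F q
                           - 2 * Dzb1 (kk F) q * Dzb1 (PP F) q)%C.
Proof.
  intros H hq.
  assert (E := KK_comm U F (Pb F) q H (gPb U F H) hq).
  set (a := Dzb1 (kk F)) in *.
  set (e := Ad (Ng (Lf (Dz1 a))) (Ng (Mu (Lf a) (Lf (PP F))))).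
  assert (ge : GoodE U e).
  { simpl. repeat split. apply (gz1 U F _ H). apply (gzb1 U F _ H (gk U F H)).
    apply (gzb1 U F _ H (gk U F H)). apply (gP U F H). }
  assert (E2 : Dzb1 (KK F (Pb F)) q = Wop 1 (ev e) q).
  { change (Wop 1 (KK F (Pb F)) q = Wop 1 (ev e) q). apply (W_ext U); auto. apply (hU _ _ H).
    intros y hy. rewrite (KPb U F y H hy). reflexivity. }
  rewrite (ev_W U e q 1 ge hq) in E2. cbn [ev dW Wop e] in E2.
  change (Dzb1 (Dz1 a) q) with (Wop 1 (Wop 0 a) q) in E2.
  rewrite (W_comm U a q 1 0 (hU _ _ H) (gzb1 U F _ H (gk U F H)) hq) in E2. cbn [Wop] in E2.
  rewrite (LPb U F q H hq) in E.
  assert (E3 : KK F (Dzb1 (Pb F)) q = (Dzb1 (KK F (Pb F)) q - a q * Dzb1 (PP F) q)%C)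
    by (rewrite E; ring).
  rewrite E3, E2. unfold a. ring.
Qed.


Lemma Dz2_KK F g q : Dz2 g q = (KK F g q - kk F q * Dz1 g q)%C.
Proof. unfold KK, L1, L2. ring. Qed.

Lemma conj_neq0 (z : C) : z <> 0%C -> Cconj z <> 0%C.
Proof.
  intros h e. apply h. destruct z as [x y]. unfold Cconj, RtoC in *. simpl in e.
  injection e as e1 e2. apply injective_projections; simpl; lra.
Qed.

Ltac solve_good :=
  repeat match goal with
  | Hh : Hyp _ ?F |- Good _ (KK ?F ?g) => apply (GoodKK _ F g Hh)
  | Hh : Hyp _ ?F |- Good _ (Lb1 ?g) => apply (gzb1 _ F g Hh)
  | Hh : Hyp _ ?F |- Good _ (Dzb1 ?g) => apply (gzb1 _ F g Hh)
  | Hh : Hyp _ ?F |- Good _ (L1 ?g) => apply (gz1 _ F g Hh)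
  | Hh : Hyp _ ?F |- Good _ (Dz1 ?g) => apply (gz1 _ F g Hh)
  | Hh : Hyp _ ?F |- Good _ (kk ?F) => apply (gk _ F Hh)
  | Hh : Hyp _ ?F |- Good _ (Pb ?F) => apply (gPb _ F Hh)
  | Hh : Hyp _ ?F |- Good _ (fun x => Cconj (?h x)) => apply (Good_conj _ h (hU _ _ Hh))
  | |- forall x, _ -> _ => let x := fresh "x" in let hx := fresh "hx" in intros x hx
  | |- (?u * ?v)%C <> _ => apply Cmult_neq_0
  | |- Cconj ?z <> _ => apply conj_neq0
  | Hh : Hyp _ ?F |- Lb1 (kk ?F) ?x <> _ => apply (ha _ _ Hh); assumption
  | Hh : Hyp _ ?F |- Dzb1 (kk ?F) ?x <> _ => apply (ha _ _ Hh); assumption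
  end.

Lemma comm_b1_1 U F g q : Hyp U F -> Good U g -> U q -> Dzb1 (Dz1 g) q = Dz1 (Dzb1 g) q.
Proof. intros H hg hq. exact (W_comm U g q 1 0 (hU _ _ H) hg hq). Qed.

Lemma Pb_val F q : Pb F q = Cconj (PP F q).
Proof. reflexivity. Qed.

Lemma Cconj_RtoC (r : R) : Cconj (RtoC r) = RtoC r.
Proof. unfold Cconj, RtoC; simpl. f_equal. ring. Qed.

Lemma RtoC_neq (r : R) : r <> 0 -> RtoC r <> 0%C.
Proof. intros h e. apply h. unfold RtoC in e. injection e. auto. Qed.

Theorem proposition8p1 (U : pt -> Prop) (F : pt -> R) :
  open U ->
  smooth_on U (Fc F) ->
  (forall p, U p -> F_z1zb1 F p <> 0%C) ->
  (forall p, U p ->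
     (F_z1zb1 F p * F_z2zb2 F p - F_z2zb1 F p * F_z1zb2 F p)%C = 0%C) ->
  (forall p, U p -> Lb1 (kk F) p <> 0%C) ->
  forall p, U p -> Q0 F p = Q0_rhs F p.
Proof.
  intros hU0 hs hA0 _ ha0 p hp.
  assert (H : Hyp U F) by (constructor; auto; apply Good_smooth; auto).
  assert (gk' := gk U F H).
  assert (ga : Good U (Lb1 (kk F))) by (apply (gzb1 U F _ H gk')).
  assert (gb : Good U (Lb1 (Lb1 (kk F)))) by (apply (gzb1 U F _ H ga)).
  assert (gc : Good U (Lb1 (Lb1 (Lb1 (kk F))))) by (apply (gzb1 U F _ H gb)).
  assert (haU : forall x, U x -> Lb1 (kk F) x <> 0%C) by exact ha0.
  eassert (EI : I0 F = ev _).
  { apply reify_helper; intro x; unfold I0;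
    lazymatch goal with |- ?l = ev ?E ?y => let r := reif y l in unify E r; reflexivity end. }
  eassert (EV : V0 F = ev _).
  { apply reify_helper; intro x; unfold V0;
    lazymatch goal with |- ?l = ev ?E ?y => let r := reif y l in unify E r; reflexivity end. }
  rewrite L1L1kb, L1kb in EI.
  lazymatch type of EI with _ = ev ?e => set (eI := e) in EI end.
  lazymatch type of EV with _ = ev ?e => set (eV := e) in EV end.
  assert (gI : GoodE U eI) by (unfold eI; simpl; repeat split; solve_good).
  assert (gV : GoodE U eV) by (unfold eV; simpl; repeat split; solve_good).
  set (eR := Mu (Lf (Lb1 (Lb1 (kk F)))) (Iv (Lf (Lb1 (kk F))))).
  assert (gR : GoodE U eR) by (unfold eR; simpl; repeat split; solve_good).
  assert (DI : Lb1 (I0 F) p = ev (dW eI 1) p) by (rewrite EI; exact (ev_W U eI p 1 gI hp)).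
  assert (DV1 : Dz1 (V0 F) p = ev (dW eV 0) p) by (rewrite EV; exact (ev_W U eV p 0 gV hp)).
  assert (DV2 : Dz2 (V0 F) p = ev (dW eV 2) p) by (rewrite EV; exact (ev_W U eV p 2 gV hp)).
  assert (DR : L1 (fun q => Lb1 (Lb1 (kk F)) q / Lb1 (kk F) q)%C p = ev (dW eR 0) p)
    by exact (ev_W U eR p 0 gR hp).
  unfold Q0, Q0_rhs.
  rewrite DI, DR.
  change (KK F (V0 F) p) with (kk F p * Dz1 (V0 F) p + Dz2 (V0 F) p)%C.
  rewrite DV1, DV2, EI.
  unfold eI, eV, eR. cbn [ev dW Wop wbar].
  unfold Lb1, L1, L2.
  rewrite (KK_comm U F (Dzb1 (Dzb1 (kk F))) p H gb hp), (KK_comm U F (Dzb1 (kk F)) p H ga hp).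
  rewrite <- !conj_Dz1.
  rewrite (comm_b1_1 U F (Dzb1 (kk F)) p H ga hp).
  rewrite !(Dz2_KK F).
  rewrite (KPb U F p H hp), (KDPb U F p H hp), (LPb U F p H hp).
  unfold Bb, BB. rewrite !(Pb_val F p).
  rewrite !re_alt.
  unfold Lb1.
  rewrite (DP_real U F p H hp).
  assert (ha1 : Dzb1 (kk F) p <> 0%C) by (apply (ha _ _ H); auto).
  assert (ha2 : Cconj (Dzb1 (kk F) p) <> 0%C) by (apply conj_neq0; auto).
  assert (h3 : RtoC 3 <> 0%C) by (apply RtoC_neq; lra).
  do 3 (rewrite ?Cdiv_conj by auto; rewrite ?Cmult_conj, ?Cplus_conj, ?Cminus_conj, ?Copp_conj;
    rewrite ?Cinv_conj by (auto; repeat apply Cmult_neq_0; auto)).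
  rewrite ?Cconj_conj, ?Cconj_RtoC.
  rewrite (Cinv_conj (Dzb1 (kk F) p * Dzb1 (kk F) p)) by (apply Cmult_neq_0; auto).
  rewrite Cmult_conj.
  generalize (Cconj (Dz1 (Dzb1 (Dzb1 (kk F))) p)) as cLb.
  generalize (Cconj (Dz1 (Dzb1 (kk F)) p)) as cLa.
  generalize (Cconj (Dzb1 (Dzb1 (kk F)) p)) as cb.
  generalize (Cconj (PP F p)) as cP.
  revert ha2. generalize (Cconj (Dzb1 (kk F) p)) as ca.
  generalize (KK F (Dzb1 (Dzb1 (Dzb1 (kk F)))) p) as Kc.
  generalize (KK F (Dzb1 (Dzb1 (kk F))) p) as Kb.
  generalize (KK F (Dzb1 (kk F)) p) as Ka.
  generalize (Dz1 (Dzb1 (Dzb1 (Dzb1 (kk F)))) p) as Lc.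
  generalize (Dz1 (Dzb1 (Dzb1 (kk F))) p) as Lb.
  generalize (Dz1 (Dzb1 (kk F)) p) as La.
  generalize (Dz1 (Dzb1 (Pb F)) p) as LDPb.
  generalize (Dzb1 (Pb F) p) as DPb.
  generalize (Dzb1 (PP F) p) as DP.
  generalize (I0b F p) as Ib.
  generalize (PP F p) as P.
  generalize (kk F p) as k.
  generalize (Dzb1 (Dzb1 (Dzb1 (kk F))) p) as c.
  generalize (Dzb1 (Dzb1 (kk F)) p) as b.
  revert ha1. generalize (Dzb1 (kk F) p) as a.
  intros. field. split; auto.
Qed.
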